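(* Let $r\ge0$, $t\ge0$, $k\ge0$, $\ell\ge1$ be integers. Let $G$ be a graph having an $(H,L)$-partition with width $\ell$, where $H$ is a graph of treewidth at most $t$ and $L$ is a graph with $\Delta(L^r)\le k$. Then every $r$-shallow minor $G'$ of $G$ has a $(J,L^{2r+1})$-partition with width at most $\ell(k+1)$, for some graph $J$ with treewidth at most $\binom{2r+1+t}{t}-1$.
   Context: Graphs are finite, simple, undirected. For a graph $H$, an $H$-partition of a graph $G$ is a partition $(Y_x: x\in V(H))$ of $V(G)$ (parts may be empty) indexed by $V(H)$ such that for every edge $vw\in E(G)$ with $v\in Y_x$, $w\in Y_y$, either $x=y$ or $xy\in E(H)$. An $(H,L)$-partition of $G$ is a pair $(\mathcal{Y},\mathcal{Z})$ consisting of an $H$-partition $\mathcal{Y}=(Y_y)$ and an $L$-partition $\mathcal{Z}=(Z_z)$ of $G$; its width is $\max\{|Y_y\cap Z_z|: y\in V(H), z\in V(L)\}$. For $m\ge0$, $L^m$ has vertex set $V(L)$ with distinct $u,v$ adjacent iff $\mathrm{dist}_L(u,v)\le m$. $G'$ is an $r$-shallow minor of $G$ if there are pairwise vertex-disjoint connected subgraphs $\mu(v)$ ($v\in V(G')$) of $G$, each of radius at most $r$, such that for every $vw\in E(G')$ some edge of $G$ joins $\mu(v)$ and $\mu(w)$. *)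

(* Defs.v *)
(* Graphs are finite simple undirected: a relation e on a finType. *)
From mathcomp Require Import all_boot.
Set Implicit Arguments. Unset Strict Implicit. Unset Printing Implicit Defensive.

Definition simple_graph (V : finType) (e : rel V) : Prop :=
  (forall x, ~~ e x x) /\ (forall x y, e x y = e y x).

Fixpoint reach_le (V : finType) (e : rel V) (m : nat) (u v : V) : bool :=
  match m with
  | 0 => u == v
  | m'.+1 => reach_le e m' u v || [exists w, reach_le e m' u w && e w v]
  end.

Definition graph_pow (V : finType) (e : rel V) (m : nat) : rel V :=
  fun u v => (u != v) && reach_le e m u v.

Definition max_deg_le (V : finType) (e : rel V) (k : nat) : Prop :=
  forall v, #|[set w | e v w]| <= k.

(* An H-partition of G, given as the map sending each vertex of G to the
   index of its part (parts Y_x = f^-1(x), possibly empty). *)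
Definition is_partition (VG VH : finType) (eG : rel VG) (eH : rel VH)
  (f : VG -> VH) : Prop :=
  forall v w, eG v w -> f v = f w \/ eH (f v) (f w).

Definition pwidth (VG VH VL : finType) (f : VG -> VH) (g : VG -> VL) : nat :=
  \max_(y : VH) \max_(z : VL) #|[set v | (f v == y) && (g v == z)]|.

Definition induced (V : finType) (e : rel V) (S : {set V}) : rel V :=
  fun a b => [&& e a b, a \in S & b \in S].

Definition is_tree (VT : finType) (eT : rel VT) : Prop :=
  simple_graph eT /\ 0 < #|VT| /\ (forall x y, connect eT x y) /\
  #|[set p : VT * VT | eT p.1 p.2]| = 2 * (#|VT| - 1).

Definition tree_decomposition (V : finType) (e : rel V)
  (VT : finType) (eT : rel VT) (B : VT -> {set V}) : Prop :=
  is_tree eT /\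
  (forall v, exists x, v \in B x) /\
  (forall v w, e v w -> exists x, (v \in B x) && (w \in B x)) /\
  (forall v x y, v \in B x -> v \in B y ->
     connect (induced eT [set z | v \in B z]) x y).

Definition treewidth_le (V : finType) (e : rel V) (w : nat) : Prop :=
  exists (VT : finType) (eT : rel VT) (B : VT -> {set V}),
    tree_decomposition e eT B /\ forall x, #|B x| <= w.+1.

Definition radius_le (V : finType) (e : rel V) (S : {set V}) (r : nat) : Prop :=
  exists2 c, c \in S & forall u, u \in S -> reach_le (induced e S) r c u.

Definition shallow_minor_model (V : finType) (e : rel V) (r : nat)
  (V' : finType) (e' : rel V') (mu : V' -> {set V}) : Prop :=
  (forall v w, v != w -> [disjoint mu v & mu w]) /\
  (forall v, radius_le e (mu v) r) /\
  (forall v w, e' v w -> exists a b, [/\ a \in mu v, b \in mu w & e a b]).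

Definition shallow_minor (V : finType) (e : rel V) (r : nat)
  (V' : finType) (e' : rel V') : Prop :=
  exists mu, shallow_minor_model e r e' mu.

(* Main.v *)
Require Import Defs.
From mathcomp Require Import all_boot.
From mathcomp Require Import zify.
Set Implicit Arguments. Unset Strict Implicit. Unset Printing Implicit Defensive.

Section Reach.
Variable V : finType.

Lemma rl_refl (e : rel V) m u : reach_le e m u u.
Proof. by elim: m => [|m IH] /=; rewrite ?eqxx ?IH. Qed.

Lemma rl_S (e : rel V) m u v : reach_le e m u v -> reach_le e m.+1 u v.
Proof. by move=> H /=; rewrite H. Qed.

Lemma rl_mono (e : rel V) m n u v : m <= n -> reach_le e m u v -> reach_le e n u v.
Proof.
move=> /subnKC <-; elim: (n - m) => [|k IH] H; first by rewrite addn0.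
by rewrite addnS; apply: rl_S; apply: IH.
Qed.

Lemma rl_snoc (e : rel V) m u w v : reach_le e m u w -> e w v -> reach_le e m.+1 u v.
Proof. by move=> H1 H2 /=; apply/orP; right; apply/existsP; exists w; rewrite H1. Qed.

Lemma rl_ind (e : rel V) (P : nat -> V -> Prop) u :
  P 0 u -> (forall m w v, reach_le e m u w -> P m w -> e w v -> P m.+1 v) ->
  (forall m v, P m v -> P m.+1 v) ->
  forall m v, reach_le e m u v -> P m v.
Proof.
move=> H0 Hs Hm; elim=> [|m IH] v /=; first by move/eqP <-.
case/orP; first by move/IH; apply: Hm.
by case/existsP=> w /andP [H1 H2]; apply: Hs (IH _ H1) H2.
Qed.

Lemma rl_cat (e : rel V) m n u w v :
  reach_le e m u w -> reach_le e n w v -> reach_le e (m + n) u v.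
Proof.
move=> H1; elim: n v => [|n IH] v /=; first by rewrite addn0 => /eqP <-.
rewrite addnS; case/orP; first by move/IH; apply: rl_S.
by case/existsP=> x /andP [H2 H3]; apply: rl_snoc (IH _ H2) H3.
Qed.

Lemma rl_cons (e : rel V) m u w v : e u w -> reach_le e m w v -> reach_le e m.+1 u v.
Proof.
move=> H1 H2; rewrite -add1n; apply: rl_cat H2.
by apply: (@rl_snoc e 0 u u w); rewrite /= ?eqxx.
Qed.

Lemma rl_sym (e : rel V) : symmetric e -> forall m u v, reach_le e m u v -> reach_le e m v u.
Proof.
move=> se m u v; move: m v; apply: rl_ind; first exact: rl_refl.
  move=> m w v _ H ewv; rewrite -add1n; apply: rl_cat H.
  by apply: (@rl_snoc e 0 v v w); rewrite /= ?eqxx // se.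
by move=> m v; apply: rl_S.
Qed.

Lemma rl_sub (e e' : rel V) : subrel e e' -> forall m u v, reach_le e m u v -> reach_le e' m u v.
Proof.
move=> se m u v; move: m v; apply: rl_ind; first exact: rl_refl.
  by move=> m w v _ H ewv; apply: rl_snoc H (se _ _ ewv).
by move=> m v; apply: rl_S.
Qed.

Lemma rl_endP (e : rel V) (P : pred V) m u v :
  (forall a b, e a b -> P b) -> reach_le e m u v -> P u -> P v.
Proof.
move=> he; move: m v; apply: rl_ind => //.
by move=> m w v _ _ /he.
Qed.

End Reach.

Lemma rl_map (V W : finType) (e : rel V) (e' : rel W) (h : V -> W) :
  (forall a b, e a b -> h a = h b \/ e' (h a) (h b)) ->
  forall m u v, reach_le e m u v -> reach_le e' m (h u) (h v).
Proof.
move=> he m u v; move: m v; apply: rl_ind; first by rewrite /= eqxx.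
  move=> m w v _ H ewv; case: (he _ _ ewv) => [E|E]; first by rewrite /= -E H.
  exact: (rl_snoc H E).
by move=> m v; apply: rl_S.
Qed.


Section Count.
Variable V : finType.
Variable key : V -> nat.
Variable N : V -> {set V}.
Hypothesis key_inj : injective key.
Hypothesis H1 : forall c d, d \in N c -> key c < key d.
Hypothesis H2 : forall c d d', d \in N c -> d' \in N c -> key d < key d' -> d' \in N d.

Fixpoint RR (D : {set V}) (m : nat) (v : V) : {set V} :=
  match m with
  | 0 => [set v]
  | m'.+1 => v |: \bigcup_(d in N v :&: D) RR D m' d
  end.

Lemma RR_self (D : {set V}) m v : v \in RR D m v.
Proof. by case: m => [|m] /=; rewrite ?set11 ?setU11. Qed.

Lemma RR_S (D : {set V}) m v : RR D m v \subset RR D m.+1 v.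
Proof.
elim: m v => [|m IH] v /=.
  by apply/subsetP=> x; rewrite inE => /eqP ->; rewrite setU11.
apply/subsetP=> x; rewrite !inE; case/orP=> [->//|].
case/bigcupP=> d Hd Hx; apply/orP; right; apply/bigcupP; exists d => //.
exact: (subsetP (IH d)).
Qed.

Lemma RR_mono (D : {set V}) m n v : m <= n -> RR D m v \subset RR D n v.
Proof.
move=> /subnKC <-; elim: (n - m) => [|k IH]; first by rewrite addn0.
by rewrite addnS; apply: subset_trans IH (RR_S _ _ _).
Qed.

Lemma RR_step (D : {set V}) m v d x : d \in N v -> d \in D -> x \in RR D m d -> x \in RR D m.+1 v.
Proof.
move=> Hd HD Hx /=; rewrite !inE; apply/orP; right; apply/bigcupP; exists d => //.
by rewrite inE Hd.
Qed.
Arguments RR_step [D m v d x].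

Lemma RR_snoc (D : {set V}) m u M w : M \in RR D m u -> w \in N M -> w \in D -> w \in RR D m.+1 u.
Proof.
move=> + Hw HD; elim: m u => [|m IH] u /=.
  rewrite inE => /eqP <-; rewrite !inE; apply/orP; right; apply/bigcupP.
  by exists w; rewrite ?inE ?Hw ?HD.
rewrite !inE; case/orP=> [/eqP <-|].
  apply/orP; right; apply/bigcupP; exists w; first by rewrite inE Hw.
  by rewrite /= setU11.
case/bigcupP=> d Hd HM; apply/orP; right; apply/bigcupP; exists d => //.
exact: IH.
Qed.

Lemma RR_SP (D : {set V}) m v u : u \in RR D m.+1 v ->
  u = v \/ exists2 d, d \in N v :&: D & u \in RR D m d.
Proof. by rewrite /= !inE => /orP [/eqP ->|/bigcupP [d H1' H2']]; [left|right; exists d]. Qed.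

Lemma RR_empty (D : {set V}) m v : N v :&: D = set0 -> RR D m v = [set v].
Proof.
move=> E; case: m => [|m] //=; rewrite E big_set0 setU0 //.
Qed.

Lemma RR_count t : forall m (D : {set V}) v, v \in D ->
  (forall c, c \in D -> #|N c :&: D| <= t) -> #|RR D m v| <= 'C(m + t, t).
Proof.
elim: t => [|t IHt] m D v vD Hc.
  rewrite bin0 RR_empty ?cards1 //.
  by apply/eqP; rewrite -cards_eq0 -leqn0 Hc.
elim: m v vD => [|m IHm] v vD; first by rewrite /= cards1 bin_gt0 leq_addl.
case: (set_0Vmem (N v :&: D)) => [E|[d0 Hd0]].
  by rewrite RR_empty // cards1 bin_gt0 leq_addl.
set z := [arg max_(d > d0 in N v :&: D) key d].
have [zN zmax] : z \in N v :&: D /\ forall d, d \in N v :&: D -> key d <= key z.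
  by rewrite /z; case: arg_maxnP => // x Hx Hm; split.
move: (zN); rewrite inE => /andP [zN1 zD].
set D' := [set c in D | (key c < key z) && (z \in N c)].
have D'D : D' \subset D by apply/subsetP=> c; rewrite inE => /andP [].
have vD' : v \in D' by rewrite inE vD zN1 H1.
have split : forall j w u, w \in D' -> u \in RR D j w ->
    u \in RR D' j w \/ u \in RR D j z.
  elim=> [|j IH] w u wD'.
    by rewrite /= inE => /eqP ->; left.
  case/RR_SP=> [->|[d]]; first by left; apply: RR_self.
  rewrite inE => /andP [dNw dD] Hu.
  move: wD'; rewrite inE => /andP [wD /andP [kwz zNw]].
  case: (ltngtP (key d) (key z)) => [kdz|kzd|kdz].
  - have dD' : d \in D' by rewrite inE dD kdz (H2 dNw zNw kdz).
    case: (IH d u dD' Hu) => Hu'.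
      by left; apply: (RR_step dNw dD' Hu').
    by right; apply: (subsetP (RR_S _ _ _)).
  - by right; apply: (RR_step (H2 zNw dNw kzd) dD Hu).
  - have dz : d = z by apply: key_inj.
    by right; rewrite -dz; apply: (subsetP (RR_S _ _ _)).
have sub : RR D m.+1 v \subset RR D' m.+1 v :|: RR D m z.
  apply/subsetP=> u; case/RR_SP=> [->|[d]]; first by rewrite inE RR_self.
  rewrite inE => /andP [dNv dD] Hu; rewrite inE.
  case: (ltngtP (key d) (key z)) => [kdz|kzd|kdz].
  - have dD' : d \in D' by rewrite inE dD kdz (H2 dNv zN1 kdz).
    case: (split m d u dD' Hu) => Hu'.
      by rewrite (RR_step dNv dD' Hu').
    by rewrite Hu' orbT.
  - by move: (zmax d); rewrite inE dNv dD => /(_ isT); rewrite leqNgt kzd.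
  - have dz : d = z by apply: key_inj.
    by rewrite -dz Hu orbT.
apply: leq_trans (subset_leq_card sub) _; apply: leq_trans (leq_card_setU _ _) _.
have c1 : #|RR D' m.+1 v| <= 'C(m.+1 + t, t).
  apply: IHt => // c; rewrite inE => /andP [cD /andP [kcz zNc]].
  have : #|N c :&: D'| < #|N c :&: D|.
    apply: proper_card; apply/properP; split.
      apply/subsetP=> x; rewrite !inE => /andP [-> /andP [->]] //.
    by exists z; rewrite !inE ?zNc ?zD // ltnn.
  by move=> H; rewrite -ltnS; apply: leq_trans H (Hc _ cD).
have c2 : #|RR D m z| <= 'C(m + t.+1, t.+1) by apply: IHm.
apply: leq_trans (leq_add c1 c2) _.
have -> : m.+1 + t.+1 = (m.+1 + t).+1 by rewrite addnS.
rewrite binS; have -> : m + t.+1 = m.+1 + t by rewrite addnS addSn.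
by rewrite addnC.
Qed.

End Count.

Lemma path_rl (V : finType) (e : rel V) x p : path e x p -> reach_le e (size p) x (last x p).
Proof.
elim: p x => [|y p IH] x /=; first by rewrite eqxx.
by case/andP=> H1 H2; apply: rl_cons H1 (IH _ H2).
Qed.

Section Rooted.
Variable VT : finType.
Variable eT : rel VT.
Variable rho : VT.
Hypothesis htree : is_tree eT.

Let sT : simple_graph eT := htree.1.
Let eT_sym : symmetric eT := sT.2.
Let eT_irr x : ~~ eT x x := sT.1 x.
Let conT : forall x y, connect eT x y := htree.2.2.1.
Let cntT : #|[set p : VT * VT | eT p.1 p.2]| = 2 * (#|VT| - 1) := htree.2.2.2.

Lemma reach_ex x : exists m, reach_le eT m rho x.
Proof. by case/connectP: (conT rho x) => p Hp ->; exists (size p); apply: path_rl. Qed.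

Definition dep x := ex_minn (reach_ex x).

Lemma dep_reach x : reach_le eT (dep x) rho x.
Proof. by rewrite /dep; case: ex_minnP. Qed.

Lemma dep_min x m : reach_le eT m rho x -> dep x <= m.
Proof. by rewrite /dep; case: ex_minnP => n _ H /H. Qed.

Lemma dep_rho : dep rho = 0.
Proof. by apply/eqP; rewrite -leqn0; apply: dep_min; rewrite /= eqxx. Qed.

Lemma dep0 x : dep x = 0 -> x = rho.
Proof. by move=> H; move: (dep_reach x); rewrite H /= => /eqP. Qed.

Definition par x := odflt x [pick w | eT w x && (dep w < dep x)].

Lemma par_spec x : x != rho -> eT (par x) x /\ dep x = (dep (par x)).+1.
Proof.
move=> xr; have : exists w, eT w x && (dep w < dep x).
  move: (dep_reach x); case E: (dep x) => [|m].
    by move: (dep0 E) xr => ->; rewrite eqxx.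
  rewrite /=; case/orP=> [H|].
    by move: (dep_min H); rewrite E ltnn.
  case/existsP=> w /andP [Hw1 Hw2]; exists w; rewrite Hw2 /= ltnS.
  exact: dep_min.
case=> w0 Hw0; rewrite /par; case: pickP => [w /andP [H1 H2]|/(_ w0)]; last by rewrite Hw0.
split=> //; apply/eqP; rewrite eqn_leq H2 andbT.
by apply: dep_min; apply: rl_snoc (dep_reach w) H1.
Qed.

Lemma par_rho : par rho = rho.
Proof.
rewrite /par; case: pickP => [w /andP [_]|//].
by rewrite dep_rho.
Qed.

Lemma dep_par x : dep (par x) = (dep x).-1.
Proof.
case: (eqVneq x rho) => [->|xr]; first by rewrite par_rho dep_rho.
by case: (par_spec xr) => _ ->.
Qed.

Lemma dep_iter k x : dep (iter k par x) = dep x - k.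
Proof. by elim: k => [|k IH] /=; rewrite ?subn0 // dep_par IH subnS. Qed.

Lemma iter_rho k : iter k par rho = rho.
Proof. by elim: k => [|k IH] //=; rewrite IH par_rho. Qed.

Lemma iter_big k x : dep x <= k -> iter k par x = rho.
Proof.
move=> H; rewrite -(subnK H) iterD.
have -> : iter (dep x) par x = rho by apply: dep0; rewrite dep_iter subnn.
exact: iter_rho.
Qed.

Definition anc x y := iter (dep y - dep x) par y == x.

Lemma ancP x y : reflect (exists k, iter k par y = x) (anc x y).
Proof.
apply: (iffP eqP) => [H|[k Hk]]; first by exists (dep y - dep x).
case: (leqP k (dep y)) => Hk2.
  by have -> : dep y - dep x = k by rewrite -Hk dep_iter; lia.
have E : x = rho by rewrite -Hk iter_big // ltnW.
by rewrite E dep_rho subn0 iter_big.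
Qed.

Lemma anc_refl x : anc x x.
Proof. by apply/ancP; exists 0. Qed.

Lemma anc_par x : anc (par x) x.
Proof. by apply/ancP; exists 1. Qed.

Lemma anc_trans x y z : anc x y -> anc y z -> anc x z.
Proof.
by move=> /ancP [k1 <-] /ancP [k2 <-]; apply/ancP; exists (k1 + k2); rewrite iterD.
Qed.

Lemma anc_dep x y : anc x y -> dep x <= dep y.
Proof. by case/ancP=> k <-; rewrite dep_iter leq_subr. Qed.

Lemma anc_eq x y : anc x y -> dep y <= dep x -> x = y.
Proof.
case/ancP=> k <-; rewrite dep_iter => H.
case: (leqP k (dep y)) => Hk.
  have -> : k = 0 by lia.
  by [].
have E : dep y = 0 by lia.
by rewrite iter_big ?E // (dep0 E).
Qed.

Lemma anc_antisym x y : anc x y -> anc y x -> x = y.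
Proof. by move=> H1 H2; apply: anc_eq H1 (anc_dep H2). Qed.

Lemma anc_total x x' y : anc x y -> anc x' y -> anc x x' \/ anc x' x.
Proof.
move=> /ancP [k <-] /ancP [k' <-]; case: (leqP k k') => H.
  by right; apply/ancP; exists (k' - k); rewrite -iterD subnK.
by left; apply/ancP; exists (k - k'); rewrite -iterD subnK // ltnW.
Qed.

Lemma anc_up x y : anc x y -> x != y -> anc x (par y).
Proof.
case/ancP=> [[|k] <-]; first by rewrite eqxx.
by move=> _; apply/ancP; exists k; rewrite -iterSr.
Qed.

Lemma anc_of_par x y : anc x (par y) -> anc x y.
Proof. by move=> H; apply: anc_trans H (anc_par y). Qed.

Lemma anc_rho x : anc rho x.
Proof. by apply/ancP; exists (dep x); apply: iter_big. Qed.

Lemma edge_par x y : eT x y -> (x != rho /\ par x = y) \/ (y != rho /\ par y = x).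
Proof.
move=> Exy.
set A := [set p : VT * VT | eT p.1 p.2].
set S := [set~ rho].
set P1 := [set (z, par z) | z in S].
set P2 := [set (par z, z) | z in S].
have sub : P1 :|: P2 \subset A.
  apply/subsetP=> p; rewrite !inE => /orP [] /imsetP [z]; rewrite !inE => zr ->;
  case: (par_spec zr) => H _ //=; by rewrite eT_sym.
have c1 : #|P1| = #|S|.
  by apply: card_in_imset => a b _ _ [].
have c2 : #|P2| = #|S|.
  by apply: card_in_imset => a b _ _ [].
have dis : [disjoint P1 & P2].
  apply/pred0P=> p /=; apply/negP=> /andP [/imsetP [a Ha ->] /imsetP [b Hb [E1 E2]]].
  move: Ha Hb; rewrite !inE => Ha Hb.
  case: (par_spec Ha) => _ Da; case: (par_spec Hb) => _ Db.
  by move: Da Db; rewrite E2 -E1; lia.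
have cS : #|S| = #|VT| - 1 by rewrite cardsC1 subn1.
have cP : #|P1 :|: P2| = #|A|.
  by rewrite cntT (cardsU P1 P2) (disjoint_setI0 dis) cards0 subn0 c1 c2 cS; lia.
have EA : P1 :|: P2 = A by apply/eqP; rewrite eqEcard sub cP leqnn.
have : (x, y) \in A by rewrite inE.
rewrite -EA !inE => /orP [] /imsetP [z]; rewrite !inE => zr [-> ->].
  by left.
by right.
Qed.

Lemma exit_path (e : rel VT) x u p : path e u p -> anc x u -> ~~ anc x (last u p) ->
  exists d y, [/\ e d y, anc x d & ~~ anc x y].
Proof.
elim: p u => [|y p IH] u /=; first by move=> _ ->.
case/andP=> H1 H2 Hu; case: (boolP (anc x y)) => Hy.
  by apply: IH.
by move=> _; exists u, y.
Qed.

End Rooted.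

Section TD.
Variables (VH : finType) (eH : rel VH) (VT : finType) (eT : rel VT) (rho : VT).
Variable B : VT -> {set VH}.
Hypothesis htd : tree_decomposition eH eT B.

Let htree : is_tree eT := htd.1.
Let cover : forall v, exists x, v \in B x := htd.2.1.
Let edges : forall v w, eH v w -> exists x, (v \in B x) && (w \in B x) := htd.2.2.1.
Let conB : forall v x y, v \in B x -> v \in B y ->
     connect (induced eT [set z | v \in B z]) x y := htd.2.2.2.

Local Notation dep := (dep rho htree).
Local Notation par := (par rho htree).
Local Notation anc := (anc rho htree).

Definition Nc c := [set x | c \in B x].

Definition top c := odflt rho [pick x in Nc c | [forall y in Nc c, dep x <= dep y]].

Lemma top_spec c : top c \in Nc c /\ forall y, y \in Nc c -> dep (top c) <= dep y.
Proof.
rewrite /top; case: pickP => [x /andP [H1 /forall_inP H2]|H]; first by split.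
exfalso; case: (cover c) => x0 Hx0.
have x0N : x0 \in Nc c by rewrite inE.
case: (arg_minnP dep x0N) => x Hx Hm.
move: (H x) => /negbT; rewrite negb_and => /orP [] /negP; first by [].
by apply; apply/forall_inP.
Qed.

Lemma top_in c : c \in B (top c).
Proof. by case: (top_spec c); rewrite inE. Qed.

Lemma top_min c y : c \in B y -> dep (top c) <= dep y.
Proof. by case: (top_spec c) => _ H Hy; apply: H; rewrite inE. Qed.

Lemma Nc_par c x : c \in B x -> x != top c -> c \in B (par x).
Proof.
move=> Hx Hne.
case/connectP: (conB Hx (top_in c)) => p Hp Elast.
have nanc : ~~ anc x (top c).
  apply/negP=> H; move/eqP: Hne; apply.
  by apply: anc_eq H (top_min Hx).
case: (@exit_path _ _ rho htree _ x x p Hp (anc_refl rho htree x)); first by rewrite -Elast.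
move=> d [y [Hdy Hd Hy]].
move: Hdy; rewrite /induced !inE => /and3P [Edy dN yN].
case: (edge_par rho htree Edy) => [[dr Pd]|[yr Py]].
  case: (eqVneq d x) => [Edx|Ndx]; first by rewrite -Edx Pd.
  by move: Hy; rewrite -Pd (anc_up Hd) // eq_sym.
by move: Hd; rewrite -Py => /anc_of_par; rewrite (negbTE Hy).
Qed.

Lemma anc_top c x : c \in B x -> anc (top c) x.
Proof.
move: {2}(dep x) (leqnn (dep x)) => n; elim: n x => [|n IH] x Hn Hx.
  have x0 : dep x = 0 by lia.
  have t0 : dep (top c) = 0 by move: (top_min Hx); lia.
  by rewrite (dep0 x0) (dep0 t0); apply: anc_refl.
case: (eqVneq x (top c)) => [->|Hne]; first exact: anc_refl.
have xr : x != rho.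
  apply/negP=> /eqP E; move/eqP: Hne; apply.
  have t0 : dep (top c) = 0 by move: (top_min Hx); rewrite E dep_rho; lia.
  by rewrite E (dep0 t0).
apply: anc_of_par; apply: IH (Nc_par Hx Hne).
by case: (par_spec htree xr) => _; lia.
Qed.

Lemma between c z x : anc (top c) z -> anc z x -> c \in B x -> c \in B z.
Proof.
move: {2}(dep x) (leqnn (dep x)) => n; elim: n x => [|n IH] x Hn H1 H2 Hx.
  have x0 : dep x = 0 by lia.
  have E : z = x by apply: (anc_eq H2); rewrite x0.
  by rewrite E.
case: (eqVneq z x) => [->//|Hzx].
have Hne : x != top c.
  apply/negP=> /eqP E; move/eqP: Hzx; apply.
  by apply: (anc_antisym H2); rewrite E.
have xr : x != rho.
  apply/negP=> /eqP E; move/eqP: Hzx; apply.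
  by apply: (anc_eq H2); rewrite E dep_rho.
apply: IH (anc_up H2 Hzx) (Nc_par Hx Hne).
by case: (par_spec htree xr) => _ D; rewrite D in Hn.
by [].
Qed.

End TD.

Section TD2.
Variables (VH : finType) (eH : rel VH) (VT : finType) (eT : rel VT) (rho : VT).
Variable B : VT -> {set VH}.
Hypothesis htd : tree_decomposition eH eT B.

Let htree : is_tree eT := htd.1.
Let cover : forall v, exists x, v \in B x := htd.2.1.
Let edges : forall v w, eH v w -> exists x, (v \in B x) && (w \in B x) := htd.2.2.1.

Local Notation dep := (dep rho htree).
Local Notation par := (par rho htree).
Local Notation anc := (anc rho htree).
Local Notation top := (top rho htd).

Local Notation anc_topH := (anc_top rho htd).
Local Notation top_inH := (top_in rho htd).
Definition Dm := \max_(x : VT) dep x.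
Definition key (c : VH) := (Dm - dep (top c)) * #|VH| + enum_rank c.

Lemma key_inj : injective key.
Proof.
move=> a b E.
have: (key a) %% #|VH| = (key b) %% #|VH| by rewrite E.
rewrite /key !modnMDl !modn_small ?ltn_ord // => E2.
by apply: enum_rank_inj; apply: val_inj.
Qed.

Lemma key_dep x M : key x <= key M -> dep (top M) <= dep (top x).
Proof.
rewrite /key; move=> H; rewrite leqNgt; apply/negP=> Hlt.
have hM : dep (top M) <= Dm by apply: (leq_bigmax (top M)).
set n := #|VH| in H *.
have rx : enum_rank M < n := ltn_ord _.
have : (Dm - dep (top M)).+1 * n <= (Dm - dep (top x)) * n.
  by apply: leq_mul => //; lia.
rewrite mulSn; move: H rx.
set P := (Dm - dep (top x)) * n; set Q := (Dm - dep (top M)) * n.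
move=> h1 h2 h3; have h4 : Q + enum_rank M < n + Q by rewrite addnC ltn_add2r.
have := leq_trans (leq_ltn_trans h1 h4) h3; by rewrite ltnNge leq_addr.
Qed.


Definition share a b := [exists x, (a \in B x) && (b \in B x)].
Definition sh (P : pred VH) : rel VH := fun a b => [&& P a, P b & share a b].

Lemma shareP a b : share a b -> exists x, a \in B x /\ b \in B x.
Proof. by case/existsP=> x /andP [H1 H2]; exists x. Qed.

Lemma share_in a b x : a \in B x -> b \in B x -> share a b.
Proof. by move=> H1 H2; apply/existsP; exists x; rewrite H1 H2. Qed.

Lemma share_sym a b : share a b -> share b a.
Proof. by case/shareP=> x [H1 H2]; apply: share_in H2 H1. Qed.

Lemma share_refl a : share a a.
Proof. by case: (cover a) => x Hx; exact: (share_in Hx Hx). Qed.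

Lemma share_eH a b : eH a b -> share a b.
Proof. by case/edges=> x /andP [H1 H2]; apply: share_in H1 H2. Qed.

Lemma S1 x w z : share x w -> anc z (top x) -> anc z (top w) \/ w \in B z.
Proof.
case/shareP=> q [Hxq Hwq] Hz.
have zq : anc z q := anc_trans Hz (anc_topH Hxq).
case: (anc_total zq (anc_topH Hwq)) => H; first by left.
by right; apply: between H zq Hwq.
Qed.

Lemma rl_startP (V : finType) (e : rel V) (P : pred V) m u v :
  (forall a b, e a b -> P a) -> reach_le e m u v -> u = v \/ P u.
Proof.
move=> he; move: m v; apply: rl_ind; first by left.
  move=> m w v _ [<-|Hu] ewv; last by right.
  by right; apply: he ewv.
by [].
Qed.

Lemma lemC M j x : reach_le (sh (fun c => key c <= key M)) j M x -> anc (top M) (top x).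
Proof.
move: j x; apply: rl_ind; first exact: anc_refl.
  move=> m w v _ H /and3P [_ kv Swv].
  case: (S1 Swv H) => // vB.
  have E : top v = top M.
    by apply: anc_eq (anc_topH vB) (key_dep kv).
  by rewrite E anc_refl.
by [].
Qed.

Lemma fill M j x w : reach_le (sh (fun c => key c <= key M)) j M x -> share x w ->
  key M < key w -> w \in B (top M).
Proof.
move=> H Sxw kMw.
case: (S1 Sxw (lemC H)) => // Hw.
have E : top M = top w by apply: anc_eq Hw (key_dep (ltnW kMw)).
by rewrite E top_inH.
Qed.

Lemma cross (P : pred VH) z j u w : reach_le (sh P) j u w ->
  (anc z (top u) \/ u \in B z) -> (~~ anc z (top w) \/ w \in B z) ->
  exists c, c \in B z /\ reach_le (sh P) j c w.
Proof.
move=> + Hu; move: j w; apply: rl_ind.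
- case=> [H|H]; last by exists u; split=> //; apply: rl_refl.
  case: Hu => [H'|H']; first by rewrite H' in H.
  by exists u; split=> //; apply: rl_refl.
- move=> m w v _ IH /and3P [Pw Pv Swv] Hv.
  case: (boolP (v \in B z)) => vB; first by exists v; split=> //; apply: rl_refl.
  have nv : ~~ anc z (top v) by case: Hv => // H; rewrite H in vB.
  have nw : ~~ anc z (top w).
    apply/negP=> aw; case: (S1 Swv aw) => H; first by rewrite H in nv.
    by rewrite H in vB.
  case: (IH (or_introl nw)) => c [cB Hc]; exists c; split=> //.
  by apply: rl_snoc Hc _; rewrite /sh Pw Pv Swv.
- by move=> m v IH Hv; case: (IH Hv) => c [cB Hc]; exists c; split=> //; apply: rl_S.
Qed.


Definition Np c := [set d | [&& c != d, share c d & key c < key d]].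

Lemma Np_H1 c d : d \in Np c -> key c < key d.
Proof. by rewrite inE => /and3P []. Qed.

Lemma Np_B c d : d \in Np c -> d \in B (top c).
Proof.
rewrite inE => /and3P [_ S k].
by apply: (fill (j := 0) (x := c)) => //; rewrite /= eqxx.
Qed.

Lemma Np_H2 c d d' : d \in Np c -> d' \in Np c -> key d < key d' -> d' \in Np d.
Proof.
move=> Hd Hd' k; rewrite inE k andbT.
rewrite (share_in (Np_B Hd) (Np_B Hd')) andbT.
by apply/negP=> /eqP E; rewrite E ltnn in k.
Qed.

Local Notation RRH := (RR Np setT).

Lemma SLc K k u w : reach_le (sh (fun c => key c <= K)) k u w -> key u <= K ->
  exists M i, [/\ i <= k, M \in RRH i u, key M <= K &
     reach_le (sh (fun c => key c <= key M)) (k - i) M w].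
Proof.
move=> + Ku; move: k w; apply: rl_ind.
- exists u, 0; split=> //; [by rewrite /= inE | exact: rl_refl].
- move=> k x w _ [M [i [ik MR KM HM]]] /and3P [_ Kw Sxw].
  case: (leqP (key w) (key M)) => kw.
    exists M, i; split=> //; first by apply: leqW.
    have Px : key x <= key M.
      by apply: (@rl_endP _ _ (fun c => key c <= key M) _ M x _ HM) => // a b /and3P [].
    by rewrite subSn //; apply: (rl_snoc HM); rewrite /sh Px kw Sxw.
  have wB := fill HM Sxw kw.
  have wN : w \in Np M.
    rewrite inE kw andbT (share_in (top_inH M) wB) andbT.
    by apply/negP=> /eqP E; rewrite E ltnn in kw.
  exists w, i.+1; split=> //; first by apply: (RR_snoc MR wN); rewrite inE.
  by rewrite subSS; apply: rl_refl.
- move=> k w [M [i [ik MR KM HM]]]; exists M, i; split=> //; first exact: leqW.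
  by apply: rl_mono HM; lia.
Qed.

Lemma SL k p b : reach_le (sh (fun c => key c <= key b)) k p b -> key p <= key b ->
  b \in RRH k p.
Proof.
move=> H kp; case: (SLc H kp) => M [i [ik MR KM HM]].
have kb : key b <= key M.
  by apply: (@rl_endP _ _ (fun c => key c <= key M) _ M b _ HM) => // a c /and3P [].
have E : M = b by apply: key_inj; apply/eqP; rewrite eqn_leq KM kb.
by rewrite -E; apply: (subsetP (RR_mono _ _ _ ik)).
Qed.

Lemma RR_anc m c d : d \in RRH m c -> anc (top d) (top c).
Proof.
elim: m c => [|m IH] c.
  by rewrite /= inE => /eqP ->; apply: anc_refl.
case/RR_SP=> [->|[d' Hd' Hd]]; first exact: anc_refl.
move: Hd'; rewrite inE => /andP [Hd' _].
exact: anc_trans (IH _ Hd) (anc_topH (Np_B Hd')).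
Qed.

Definition Bp s y := [set b | [exists p, (p \in B y) &&
   reach_le (sh (fun c => key c <= key b)) s p b]].

Lemma Bp_top s b : b \in Bp s (top b).
Proof. by rewrite inE; apply/existsP; exists b; rewrite top_inH rl_refl. Qed.

Lemma Bp_walk s y b : b \in Bp s y -> exists p, [/\ p \in B y, key p <= key b &
   reach_le (sh (fun c => key c <= key b)) s p b].
Proof.
rewrite inE => /existsP [p /andP [pB Hp]]; exists p; split=> //.
have he : forall a c, sh (fun c => key c <= key b) a c -> key a <= key b.
  by move=> a c /and3P [].
by case: (@rl_startP _ _ (fun c => key c <= key b) s p b he Hp) => [->|].
Qed.

Lemma Bp_anc s y b : b \in Bp s y -> anc (top b) y.
Proof.
case/Bp_walk=> p [pB kp Hp].
exact: anc_trans (RR_anc (SL Hp kp)) (anc_topH pB).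
Qed.

Lemma Bp_par s y b : b \in Bp s y -> y != top b -> b \in Bp s (par y).
Proof.
move=> Hb yt; case/Bp_walk: (Hb) => p [pB kp Hp].
have ay := Bp_anc Hb.
have apy : anc (top p) y := anc_topH pB.
case: (@cross _ (par y) s p b Hp).
- case: (anc_total (anc_par rho htree y) apy) => H; first by left.
  by right; apply: between H (anc_par rho htree y) pB.
- case: (boolP (anc (par y) (top b))) => H; last by left.
  right; have E : top b = par y.
    by apply: anc_antisym (anc_up ay _) H; rewrite eq_sym.
  by rewrite -E top_inH.
- move=> c [cB Hc]; rewrite inE; apply/existsP; exists c; rewrite cB Hc //.
Qed.

Lemma Bp_card t s y : (forall x, #|B x| <= t.+1) -> #|Bp s y| <= 'C(s.+1 + t, t).
Proof.
move=> Hbag.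
case: (set_0Vmem (B y)) => [E|[b0 Hb0]].
  have -> : Bp s y = set0.
    apply/setP=> b; rewrite in_set0; apply/negP=> /Bp_walk [p [pB _ _]].
    by rewrite E inE in pB.
  by rewrite cards0.
set beta := [arg min_(d < b0 in B y) key d].
have [bB bmin] : beta \in B y /\ forall d, d \in B y -> key beta <= key d.
  by rewrite /beta; case: arg_minnP => // x Hx Hm; split.
have sub : Bp s y \subset RRH s.+1 beta.
  apply/subsetP=> b /Bp_walk [p [pB kp Hp]].
  have bR := SL Hp kp.
  case: (eqVneq p beta) => [E|ne].
    by apply: (subsetP (RR_S _ _ _ _)); rewrite -E.
  have kbp : key beta < key p.
    rewrite ltn_neqAle bmin // andbT; apply/negP=> /eqP E.
    by move: ne; rewrite (key_inj E) eqxx.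
  have pN : p \in Np beta.
    by rewrite inE kbp andbT (share_in bB pB) andbT eq_sym.
  by apply: (RR_step pN) => //; rewrite inE.
apply: leq_trans (subset_leq_card sub) _.
apply: (RR_count key_inj Np_H1 Np_H2); first by rewrite inE.
move=> c _; rewrite setIT.
have sub2 : Np c \subset B (top c) :\ c.
  by apply/subsetP=> d Hd; rewrite !inE (Np_B Hd) andbT; move: Hd; rewrite inE eq_sym => /and3P [].
apply: leq_trans (subset_leq_card sub2) _.
by move: (Hbag (top c)); rewrite (cardsD1 c) top_inH add1n ltnS.
Qed.

End TD2.



Lemma card_bigcup_leq (I T : finType) (A : {set I}) (F : I -> {set T}) :
  #|\bigcup_(i in A) F i| <= \sum_(i in A) #|F i|.
Proof.
elim/big_rec2: _ => [|i m S _ H]; first by rewrite cards0.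
by apply: leq_trans (leq_card_setU _ _) _; rewrite leq_add2l.
Qed.

Section Main.
Variables (r t k l : nat).
Variables (VG : finType) (eG : rel VG) (VH : finType) (eH : rel VH) (VL : finType) (eL : rel VL).
Hypothesis sG : simple_graph eG.
Variables (f : VG -> VH) (g : VG -> VL).
Hypothesis hf : is_partition eG eH f.
Hypothesis hg : is_partition eG eL g.
Hypothesis hw : pwidth f g = l.
Variables (VT : finType) (eT : rel VT) (B : VT -> {set VH}).
Hypothesis htd : tree_decomposition eH eT B.
Hypothesis hbag : forall x, #|B x| <= t.+1.
Variable rho : VT.
Hypothesis hdeg : max_deg_le (graph_pow eL r) k.
Variables (VG' : finType) (eG' : rel VG') (mu : VG' -> {set VG}).
Hypothesis hmu : shallow_minor_model eG r eG' mu.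
Hypothesis sG' : simple_graph eG'.

Let htree : is_tree eT := htd.1.
Local Notation key := (key rho htd).
Local Notation top := (top rho htd).
Local Notation anc := (anc rho htree).
Local Notation dep := (dep rho htree).
Local Notation par := (par rho htree).
Local Notation sh := (sh B).
Local Notation share := (share B).

Let mdis : forall v w, v != w -> [disjoint mu v & mu w] := hmu.1.
Let mrad : forall v, radius_le eG (mu v) r := hmu.2.1.
Let medge : forall v w, eG' v w -> exists a b, [/\ a \in mu v, b \in mu w & eG a b] := hmu.2.2.

Let eG_sym : symmetric eG := sG.2.

Lemma cen_ex v : exists c, (c \in mu v) && [forall u in mu v, reach_le (induced eG (mu v)) r c u].
Proof.
case: (mrad v) => c Hc H; exists c; rewrite Hc /=.
by apply/forall_inP.
Qed.

Definition cen v := xchoose (cen_ex v).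

Lemma cen_in v : cen v \in mu v.
Proof. by case/andP: (xchooseP (cen_ex v)). Qed.

Lemma cen_reach v u : u \in mu v -> reach_le (induced eG (mu v)) r (cen v) u.
Proof. by case/andP: (xchooseP (cen_ex v)) => _ /forall_inP; apply. Qed.

Lemma induced_sym (S : {set VG}) : symmetric (induced eG S).
Proof. by move=> a b; rewrite /induced eG_sym [X in _ && X]andbC. Qed.

Lemma walk2 v a b : a \in mu v -> b \in mu v -> reach_le (induced eG (mu v)) (2 * r) a b.
Proof.
move=> Ha Hb; rewrite mul2n -addnn; apply: (@rl_cat _ _ r r a (cen v)).
  exact: (rl_sym (induced_sym (mu v)) (cen_reach Ha)).
exact: cen_reach.
Qed.

Definition X v := f @: mu v.

Definition av v := [arg max_(a > f (cen v) in X v) key a].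

Lemma av_spec v : av v \in X v /\ forall a, a \in X v -> key a <= key (av v).
Proof.
have H : f (cen v) \in X v by apply: imset_f; apply: cen_in.
by rewrite /av; case: arg_maxnP => // x Hx Hm; split.
Qed.

Lemma map_walk v (P : pred VH) m a b : (forall u, u \in mu v -> P (f u)) ->
  reach_le (induced eG (mu v)) m a b -> reach_le (sh P) m (f a) (f b).
Proof.
move=> HP; apply: rl_map => x y /and3P [exy xin yin].
case: (hf exy) => [E|E]; first by left.
by right; rewrite /sh !HP //= (share_eH htd E).
Qed.

Definition s := 2 * r.

Lemma av_Bp v w : eG' v w -> key (av w) <= key (av v) -> av v \in Bp rho htd s (top (av w)).
Proof.
move=> Evw kwv.
case: (medge Evw) => a [b [aV bW Eab]].
case: (av_spec w) => /imsetP [uw uwW Euw] maxw.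
case: (av_spec v) => /imsetP [uv uvV Euv] maxv.
set z := top (av w).
have Pw : forall u, u \in mu w -> key (f u) <= key (av w).
  by move=> u Hu; apply: maxw; apply: imset_f.
have Pv : forall u, u \in mu v -> key (f u) <= key (av v).
  by move=> u Hu; apply: maxv; apply: imset_f.
have W1 := map_walk (P := fun c => key c <= key (av w)) Pw (walk2 uwW bW).
rewrite -Euw in W1.
have ab : anc z (top (f b)) := lemC W1.
have sba : share (f b) (f a).
  case: (hf Eab) => [->|E]; first exact: (share_refl htd).
  by apply: share_sym; apply: (share_eH htd E).
have W2 := map_walk (P := fun c => key c <= key (av v)) Pv (walk2 aV uvV).
rewrite -Euv in W2.
case: (@cross _ _ _ _ rho _ htd _ z _ _ _ W2).
- by case: (S1 sba ab) => H; [left|right].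
- case: (boolP (anc z (top (av v)))) => H; last by left.
  right; have E : z = top (av v).
    by apply: (anc_eq H); apply: key_dep.
  by rewrite E top_in.
- move=> c [cB Hc]; rewrite inE; apply/existsP; exists c; rewrite cB /=.
  exact: Hc.
Qed.


Definition eJ : rel VH := fun a b =>
  (a != b) && [exists y, (a \in Bp rho htd s y) && (b \in Bp rho htd s y)].

Lemma eJ_simple : simple_graph eJ.
Proof.
split=> [x|x y]; first by rewrite /eJ eqxx.
rewrite /eJ eq_sym; congr (_ && _); apply/existsP/existsP=> [] [z Hz]; exists z;
  by rewrite andbC.
Qed.

Lemma f_part : is_partition eG' eJ av.
Proof.
move=> v w Evw; case: (eqVneq (av v) (av w)) => [E|ne]; first by left.
right; rewrite /eJ ne /=; apply/existsP.
case: (leqP (key (av w)) (key (av v))) => kk.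
  by exists (top (av w)); rewrite (av_Bp Evw kk) Bp_top.
have Ewv : eG' w v by rewrite sG'.2.
by exists (top (av v)); rewrite (av_Bp Ewv (ltnW kk)) Bp_top.
Qed.

Lemma g_part : is_partition eG' (graph_pow eL (2 * r + 1)) (fun v => g (cen v)).
Proof.
move=> v w Evw; case: (medge Evw) => a [b [aV bW Eab]].
have sub : forall S, subrel (induced eG S) eG by move=> S x y /and3P [].
have H1 : reach_le eG r (cen v) a := rl_sub (sub _) (cen_reach aV).
have H2 : reach_le eG r b (cen w) := rl_sym eG_sym (rl_sub (sub _) (cen_reach bW)).
have H3 := rl_cat (rl_snoc H1 Eab) H2.
have H4 : reach_le eG (2 * r + 1) (cen v) (cen w) by apply: rl_mono H3; lia.
have H5 := rl_map hg H4.
case: (eqVneq (g (cen v)) (g (cen w))) => [E|ne]; first by left.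
by right; rewrite /graph_pow ne H5.
Qed.

Let eT_sym : symmetric eT := htree.1.2.

Lemma Bp_conn b x : b \in Bp rho htd s x ->
  connect (induced eT [set z | b \in Bp rho htd s z]) x (top b).
Proof.
move: {2}(dep x) (leqnn (dep x)) => n; elim: n x => [|n IH] x Hn Hx.
  have x0 : dep x = 0 by lia.
  have E : top b = x by apply: (anc_eq (Bp_anc Hx)); rewrite x0.
  by rewrite E connect0.
case: (eqVneq x (top b)) => [->|ne]; first exact: connect0.
have Hp := Bp_par Hx ne.
have xr : x != rho.
  apply/negP=> /eqP E; move/eqP: ne; apply.
  by symmetry; apply: (anc_eq (Bp_anc Hx)); rewrite E dep_rho.
case: (par_spec htree xr) => Ep Dp.
apply: (connect_trans (y := par x)).
  apply: connect1; apply/and3P; split; [by rewrite eT_sym Ep | by rewrite in_set | by rewrite in_set].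
apply: (IH _ _ Hp); move: Dp Hn; set a := dep (par x); set b0 := dep x; lia.
Qed.

Lemma J_tw : treewidth_le eJ ('C(2 * r + 1 + t, t) - 1).
Proof.
exists VT, eT, (Bp rho htd s); split; last first.
  move=> x; have := Bp_card rho htd s x hbag.
  have hp : 0 < 'C(2 * r + 1 + t, t) by rewrite bin_gt0 leq_addl.
  move=> H; rewrite subn1 prednK //; apply: leq_trans H _; by rewrite /s addn1.
split; first exact: htree.
split; first by move=> b; exists (top b); apply: Bp_top.
split; first by move=> a b /andP [_ /existsP [y Hy]]; exists y.
move=> b x y Hx Hy.
apply: connect_trans (Bp_conn Hx) _.
have sy : connect_sym (induced eT [set z | b \in Bp rho htd s z]).
  by apply: sym_connect_sym => u v; rewrite /induced eT_sym [X in _ && X]andbC.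
by rewrite sy; apply: Bp_conn.
Qed.


Lemma width : pwidth av (fun v => g (cen v)) <= l * (k + 1).
Proof.
rewrite /pwidth; apply/bigmax_leqP => y _; apply/bigmax_leqP => z _.
set S := [set v | (av v == y) && (g (cen v) == z)].
have uo_ex : forall v, exists u, (u \in mu v) && (f u == av v).
  by move=> v; case: (av_spec v) => /imsetP [u Hu E] _; exists u; rewrite Hu E eqxx.
pose uo v := xchoose (uo_ex v).
have uo_in v : uo v \in mu v by case/andP: (xchooseP (uo_ex v)).
have uo_f v : f (uo v) = av v by case/andP: (xchooseP (uo_ex v)) => _ /eqP.
set Ball := [set z' | reach_le eL r z z'].
set T := \bigcup_(z' in Ball) [set u | (f u == y) && (g u == z')].
have subi : forall S0, subrel (induced eG S0) eG by move=> S0 x0 y0 /and3P [].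
have sub : uo @: S \subset T.
  apply/subsetP=> u /imsetP [v]; rewrite inE => /andP [/eqP Ey /eqP Ez] ->.
  apply/bigcupP; exists (g (uo v)); last by rewrite inE uo_f Ey !eqxx.
  rewrite inE -Ez.
  have W : reach_le eG r (cen v) (uo v) := rl_sub (subi _) (cen_reach (uo_in v)).
  exact: (rl_map hg W).
have inj : {in S &, injective uo}.
  move=> v w _ _ E; apply/eqP; apply: contraT => ne.
  move: (mdis ne) => /disjointFr /(_ (uo_in v)).
  by rewrite E uo_in.
rewrite -(card_in_imset inj); apply: leq_trans (subset_leq_card sub) _.
apply: leq_trans (card_bigcup_leq _ _) _.
have each : forall z', #|[set u | (f u == y) && (g u == z')]| <= l.
  move=> z'; rewrite -hw /pwidth.
  apply: (leq_trans _ (leq_bigmax (F := fun y0 => \max_(z0 : VL) #|[set v | (f v == y0) && (g v == z0)]|) y)).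
  exact: (leq_bigmax (F := fun z0 => #|[set v | (f v == y) && (g v == z0)]|) z').
apply: (@leq_trans (\sum_(i in Ball) l)); first by apply: leq_sum => i _; apply: each.
rewrite sum_nat_const mulnC leq_mul2l.
have subB : Ball \subset z |: [set w | graph_pow eL r z w].
  apply/subsetP=> z'; rewrite !inE => Hz'.
  case: (eqVneq z' z) => [E|ne]; first by rewrite E.
  by rewrite /graph_pow eq_sym ne Hz' orbT.
apply/orP; right; apply: leq_trans (subset_leq_card subB) _.
apply: leq_trans (leq_card_setU _ _) _.
by rewrite cards1 addnC leq_add2r; apply: hdeg.
Qed.

End Main.

Theorem lemma10 (r t k l : nat) (hl : 1 <= l)
  (VG : finType) (eG : rel VG) (VH : finType) (eH : rel VH)
  (VL : finType) (eL : rel VL)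
  (sG : simple_graph eG) (sH : simple_graph eH) (sL : simple_graph eL)
  (f : VG -> VH) (g : VG -> VL)
  (hf : is_partition eG eH f) (hg : is_partition eG eL g)
  (hw : pwidth f g = l)
  (htw : treewidth_le eH t)
  (hdeg : max_deg_le (graph_pow eL r) k) :
  forall (VG' : finType) (eG' : rel VG'), simple_graph eG' ->
    shallow_minor eG r eG' ->
    exists (VJ : finType) (eJ : rel VJ),
      simple_graph eJ /\ treewidth_le eJ ('C(2 * r + 1 + t, t) - 1) /\
      exists (f' : VG' -> VJ) (g' : VG' -> VL),
        [/\ is_partition eG' eJ f', is_partition eG' (graph_pow eL (2 * r + 1)) g'
          & pwidth f' g' <= l * (k + 1)].
Proof.
move=> VG' eG' sG' [mu hmu].
case: htw => VT [eT [B [htd hbag]]].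
have : 0 < #|VT| by case: htd => [[_ [H _]] _].
case/card_gt0P => rho _.
exists VH, (eJ r htd rho).
split; first exact: eJ_simple.
split; first exact: (J_tw r hw htd hbag rho).
exists (av f htd rho hmu), (fun v => g (cen hmu v)).
split.
- exact: (f_part sG hf htd rho hmu sG').
- exact: (g_part sG hg hw hmu).
- exact: (width hg hw htd rho hdeg hmu).
Qed.
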